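(* Let $k,l\ge1$ with $k\ne l$ and $1\le r\le(2k+1)(2l+1)$. Let $\overline{\mathcal{B}}(2k+1,2l+1;r)$ be the subset of $\mathcal{B}(2k+1,2l+1;r)$ consisting of boards whose board partition $\begin{pmatrix}\lambda_1&\lambda_2&\lambda_3&\lambda_4\\ \delta_1&\delta_2&\delta_3&\delta_4\end{pmatrix}_c$ satisfies: (i) $\lambda_1\ge\lambda_i$ for all $i>1$; (ii) if $\lambda_1=\lambda_3$ then $\lambda_2\ge\lambda_4$; if in addition $\lambda_2=\lambda_4$ then $\delta_1\ge\delta_3$; and if further $\delta_1=\delta_3$ then $\delta_2\ge\delta_4$; (iii) if $\lambda_1=\lambda_2$ then $\lambda_3\ge\lambda_4$; if in addition $\lambda_3=\lambda_4$ then $\delta_2\ge\delta_4$; (iv) if $\lambda_1=\lambda_4$ then $\lambda_2\ge\lambda_3$; if in addition $\lambda_2=\lambda_3$ then $\delta_1\ge\delta_3$. Then: (1) $\overline{\mathcal{B}}(2k+1,2l+1;r)$ is a disjoint union of sets each consisting of all boards in $\mathcal{B}(2k+1,2l+1;r)$ with some fixed board partition; (2) every board of $\mathcal{B}(2k+1,2l+1;r)$ is equivalent under $\langle H,V\rangle$ to some board of $\overline{\mathcal{B}}(2k+1,2l+1;r)$; (3) if two boards of $\overline{\mathcal{B}}(2k+1,2l+1;r)$ are equivalent under $\langle H,V\rangle$, they have the same board partition.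
   Context: A $(2k+1)\times(2l+1)$ grid ($2k+1$ rows numbered top to bottom, $2l+1$ columns numbered left to right); $\mathcal{B}(2k+1,2l+1;r)$ is the set of boards, i.e. subsets of exactly $r$ blocked cells. The symmetry group is $\langle H,V\rangle=\{R_0,H,V,R_{180}\}$ ($H$: reflection across the horizontal midline; $V$: across the vertical midline; $R_{180}$: 180-degree rotation); boards are equivalent if some element maps one to the other. The grid is divided into nine regions: $\Lambda_1$ = rows $1..k$, cols $1..l$; $\Lambda_2$ = rows $1..k$, cols $l+2..2l+1$; $\Lambda_3$ = rows $k+2..2k+1$, cols $l+2..2l+1$; $\Lambda_4$ = rows $k+2..2k+1$, cols $1..l$; $\Delta_1$ = rows $1..k$, col $l+1$; $\Delta_2$ = row $k+1$, cols $l+2..2l+1$; $\Delta_3$ = rows $k+2..2k+1$, col $l+1$; $\Delta_4$ = row $k+1$, cols $1..l$; and the center cell $(k+1,l+1)$. The board partition $\begin{pmatrix}\lambda_1&\lambda_2&\lambda_3&\lambda_4\\ \delta_1&\delta_2&\delta_3&\delta_4\end{pmatrix}_c$ records the numbers of blocked cells $\lambda_i$ in $\Lambda_i$, $\delta_i$ in $\Delta_i$, and $c\in\{0,1\}$ at the center. *)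

(* Defs.v *)
From mathcomp Require Import all_boot.
Set Implicit Arguments. Unset Strict Implicit. Unset Printing Implicit Defensive.

(* Cells of the (2k+1) x (2l+1) grid, 0-indexed: row i (= paper row i+1),
   column j (= paper column j+1). *)
Definition cell (k l : nat) : finType := ('I_(2 * k + 1) * 'I_(2 * l + 1))%type.

(* A board: a set of blocked cells. *)
Definition board (k l : nat) := {set cell k l}.

Inductive sym := R0 | Hsym | Vsym | R180.

Definition sym_act (k l : nat) (g : sym) (x : cell k l) : cell k l :=
  match g with
  | R0 => x
  | Hsym => (rev_ord x.1, x.2)
  | Vsym => (x.1, rev_ord x.2)
  | R180 => (rev_ord x.1, rev_ord x.2)
  end.

Definition sym_board (k l : nat) (g : sym) (B : board k l) : board k l :=
  [set sym_act g x | x in B].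

Definition equiv_boards (k l : nat) (B B' : board k l) : Prop :=
  exists g : sym, B' = sym_board g B.

(* Regions (0-indexed rows/cols; middle row index k, middle column index l). *)
Section Regions.
Variables (k l : nat).
Definition count_in (B : board k l) (P : cell k l -> bool) : nat :=
  #|[set x in B | P x]|.

Definition lam1 B := count_in B (fun x => (x.1 < k) && (x.2 < l)).
Definition lam2 B := count_in B (fun x => (x.1 < k) && (l < x.2)).
Definition lam3 B := count_in B (fun x => (k < x.1) && (l < x.2)).
Definition lam4 B := count_in B (fun x => (k < x.1) && (x.2 < l)).
Definition del1 B := count_in B (fun x => (x.1 < k) && (x.2 == l :> nat)).
Definition del2 B := count_in B (fun x => (x.1 == k :> nat) && (l < x.2)).
Definition del3 B := count_in B (fun x => (k < x.1) && (x.2 == l :> nat)).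
Definition del4 B := count_in B (fun x => (x.1 == k :> nat) && (x.2 < l)).
Definition cen B := count_in B (fun x => (x.1 == k :> nat) && (x.2 == l :> nat)).
End Regions.

Definition board_partition (k l : nat) (B : board k l)
  : (nat * nat * nat * nat) * (nat * nat * nat * nat) * nat :=
  ((lam1 B, lam2 B, lam3 B, lam4 B), (del1 B, del2 B, del3 B, del4 B), cen B).

Definition in_B (k l r : nat) (B : board k l) : Prop := #|B| = r.

Definition in_Bbar (k l r : nat) (B : board k l) : Prop :=
  let l1 := lam1 B in let l2 := lam2 B in let l3 := lam3 B in let l4 := lam4 B in
  let d1 := del1 B in let d2 := del2 B in let d3 := del3 B in let d4 := del4 B in
  [/\ in_B r B,
      [/\ l2 <= l1, l3 <= l1 & l4 <= l1],
      (l1 = l3 -> l4 <= l2 /\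
         (l2 = l4 -> d3 <= d1 /\ (d1 = d3 -> d4 <= d2))),
      (l1 = l2 -> l4 <= l3 /\ (l3 = l4 -> d4 <= d2)) &
      (l1 = l4 -> l3 <= l2 /\ (l2 = l3 -> d3 <= d1))].

(* Main.v *)
Require Import Defs.
From mathcomp Require Import all_boot zify.
Set Implicit Arguments. Unset Strict Implicit.

Lemma symK k l g : involutive (@sym_act k l g).
Proof. by case: g => -[i j] //=; rewrite !rev_ordK. Qed.

Lemma count_sym k l g (B : board k l) P :
  count_in (sym_board g B) P = count_in B (fun x => P (sym_act g x)).
Proof.
rewrite /count_in /sym_board.
have inj := inv_inj (@symK k l g).
have memf y : (y \in [set sym_act g x | x in B]) = (sym_act g y \in B).
  apply/imsetP/idP => [[x xB ->]|yB]; first by rewrite symK.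
  by exists (sym_act g y); rewrite ?symK.
rewrite -(card_preimset _ inj); apply: eq_card => y; rewrite !inE memf symK.
by [].
Qed.

Ltac regt := rewrite /lam1 /lam2 /lam3 /lam4 /del1 /del2 /del3 /del4 /cen count_sym;
  apply: eq_card => -[i j]; rewrite !inE /=; congr andb;
  have := ltn_ord i; have := ltn_ord j; lia.

Lemma H_counts k l (B : board k l) :
  lam1 (sym_board Hsym B) = lam4 B /\ lam2 (sym_board Hsym B) = lam3 B /\
  lam3 (sym_board Hsym B) = lam2 B /\ lam4 (sym_board Hsym B) = lam1 B /\
  del1 (sym_board Hsym B) = del3 B /\ del2 (sym_board Hsym B) = del2 B /\
  del3 (sym_board Hsym B) = del1 B /\ del4 (sym_board Hsym B) = del4 B /\
  cen (sym_board Hsym B) = cen B.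
Proof. by do ! split; regt. Qed.

Lemma V_counts k l (B : board k l) :
  lam1 (sym_board Vsym B) = lam2 B /\ lam2 (sym_board Vsym B) = lam1 B /\
  lam3 (sym_board Vsym B) = lam4 B /\ lam4 (sym_board Vsym B) = lam3 B /\
  del1 (sym_board Vsym B) = del1 B /\ del2 (sym_board Vsym B) = del4 B /\
  del3 (sym_board Vsym B) = del3 B /\ del4 (sym_board Vsym B) = del2 B /\
  cen (sym_board Vsym B) = cen B.
Proof. by do ! split; regt. Qed.

Lemma R_counts k l (B : board k l) :
  lam1 (sym_board R180 B) = lam3 B /\ lam2 (sym_board R180 B) = lam4 B /\
  lam3 (sym_board R180 B) = lam1 B /\ lam4 (sym_board R180 B) = lam2 B /\
  del1 (sym_board R180 B) = del3 B /\ del2 (sym_board R180 B) = del4 B /\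
  del3 (sym_board R180 B) = del1 B /\ del4 (sym_board R180 B) = del2 B /\
  cen (sym_board R180 B) = cen B.
Proof. by do ! split; regt. Qed.

Lemma R0_board k l (B : board k l) : sym_board R0 B = B.
Proof. by apply/setP => x; rewrite /sym_board imset_id. Qed.

Definition condP (l1 l2 l3 l4 d1 d2 d3 d4 : nat) : Prop :=
  ((l2 <= l1 /\ l3 <= l1 /\ l4 <= l1) /\
      (l1 = l3 -> l4 <= l2 /\
         (l2 = l4 -> d3 <= d1 /\ (d1 = d3 -> d4 <= d2)))) /\
      (l1 = l2 -> l4 <= l3 /\ (l3 = l4 -> d4 <= d2)) /\
      (l1 = l4 -> l3 <= l2 /\ (l2 = l3 -> d3 <= d1)).

Lemma arith_exist l1 l2 l3 l4 d1 d2 d3 d4 :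
  condP l1 l2 l3 l4 d1 d2 d3 d4 \/ condP l4 l3 l2 l1 d3 d2 d1 d4 \/
  condP l2 l1 l4 l3 d1 d4 d3 d2 \/ condP l3 l4 l1 l2 d3 d4 d1 d2.
Proof. rewrite /condP. lia. Qed.

Lemma arith_H l1 l2 l3 l4 d1 d2 d3 d4 :
  condP l1 l2 l3 l4 d1 d2 d3 d4 -> condP l4 l3 l2 l1 d3 d2 d1 d4 ->
  l1 = l4 /\ l2 = l3 /\ d1 = d3.
Proof. rewrite /condP. lia. Qed.
Lemma arith_V l1 l2 l3 l4 d1 d2 d3 d4 :
  condP l1 l2 l3 l4 d1 d2 d3 d4 -> condP l2 l1 l4 l3 d1 d4 d3 d2 ->
  l1 = l2 /\ l3 = l4 /\ d2 = d4.
Proof. rewrite /condP. lia. Qed.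
Lemma arith_R l1 l2 l3 l4 d1 d2 d3 d4 :
  condP l1 l2 l3 l4 d1 d2 d3 d4 -> condP l3 l4 l1 l2 d3 d4 d1 d2 ->
  l1 = l3 /\ l2 = l4 /\ d1 = d3 /\ d2 = d4.
Proof. rewrite /condP. lia. Qed.

Definition condb (l1 l2 l3 l4 d1 d2 d3 d4 : nat) : bool :=
  [&& l2 <= l1, l3 <= l1, l4 <= l1,
   (l1 == l3) ==> ((l4 <= l2) && ((l2 == l4) ==> ((d3 <= d1) && ((d1 == d3) ==> (d4 <= d2))))),
   (l1 == l2) ==> ((l4 <= l3) && ((l3 == l4) ==> (d4 <= d2))) &
   (l1 == l4) ==> ((l3 <= l2) && ((l2 == l3) ==> (d3 <= d1)))].

Lemma condbP l1 l2 l3 l4 d1 d2 d3 d4 :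
  condP l1 l2 l3 l4 d1 d2 d3 d4 <-> condb l1 l2 l3 l4 d1 d2 d3 d4.
Proof.
rewrite /condP /condb.
case: (l1 =P l3) => [e13|n13]; case: (l1 =P l2) => [e12|n12];
case: (l1 =P l4) => [e14|n14]; case: (l2 =P l4) => [e24|n24];
case: (l3 =P l4) => [e34|n34]; case: (l2 =P l3) => [e23|n23];
case: (d1 =P d3) => [f13|f13] /=; split; lia.
Qed.

Lemma in_BbarE k l r (B : board k l) :
  in_Bbar r B <-> in_B r B /\ condP (lam1 B) (lam2 B) (lam3 B) (lam4 B)
                                    (del1 B) (del2 B) (del3 B) (del4 B).
Proof.
rewrite /in_Bbar /condP; split.
  by case=> h [a b c] d e f; do ! split => //.
by case=> h [[[a [b c]] d] [e f]]; split.
Qed.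

Lemma card_sym k l g (B : board k l) : #|sym_board g B| = #|B|.
Proof. by rewrite card_imset //; apply: inv_inj (@symK k l g). Qed.

Theorem theorem4p7 (k l r : nat) :
  1 <= k -> 1 <= l -> k <> l -> 1 <= r <= (2 * k + 1) * (2 * l + 1) ->
  (exists P : pred ((nat * nat * nat * nat) * (nat * nat * nat * nat) * nat),
     forall B : board k l,
       in_Bbar r B <-> (in_B r B /\ P (board_partition B))) /\
  (forall B : board k l, in_B r B ->
     exists B' : board k l, equiv_boards B B' /\ in_Bbar r B') /\
  (forall B B' : board k l, in_Bbar r B -> in_Bbar r B' ->
     equiv_boards B B' -> board_partition B = board_partition B').
Proof.
move=> _ _ _ _; split; last split.
- exists (fun t => let: ((l1, l2, l3, l4), (d1, d2, d3, d4), c) := t in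
            condb l1 l2 l3 l4 d1 d2 d3 d4).
  by move=> B; rewrite in_BbarE /= condbP.
- move=> B HB.
  have hc g : in_B r (sym_board g B) by rewrite /in_B card_sym.
  case: (arith_exist (lam1 B) (lam2 B) (lam3 B) (lam4 B)
                     (del1 B) (del2 B) (del3 B) (del4 B)) => [h|[h|[h|h]]].
  + exists (sym_board R0 B); split; first by exists R0.
    by rewrite in_BbarE R0_board.
  + exists (sym_board Hsym B); split; first by exists Hsym.
    rewrite in_BbarE; split => //.
    by case: (H_counts B) => [-> [-> [-> [-> [-> [-> [-> [-> _]]]]]]]].
  + exists (sym_board Vsym B); split; first by exists Vsym.
    rewrite in_BbarE; split => //.
    by case: (V_counts B) => [-> [-> [-> [-> [-> [-> [-> [-> _]]]]]]]].
  + exists (sym_board R180 B); split; first by exists R180.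
    rewrite in_BbarE; split => //.
    by case: (R_counts B) => [-> [-> [-> [-> [-> [-> [-> [-> _]]]]]]]].
- move=> B B' /in_BbarE [_ h] /in_BbarE [_ h'] [g eB]; subst B'.
  case: g h'.
  + by rewrite R0_board.
  + case: (H_counts B) => [e1 [e2 [e3 [e4 [e5 [e6 [e7 [e8 e9]]]]]]]].
    rewrite /board_partition e1 e2 e3 e4 e5 e6 e7 e8 e9 => h'.
    by case: (arith_H h h') => [-> [-> ->]].
  + case: (V_counts B) => [e1 [e2 [e3 [e4 [e5 [e6 [e7 [e8 e9]]]]]]]].
    rewrite /board_partition e1 e2 e3 e4 e5 e6 e7 e8 e9 => h'.
    by case: (arith_V h h') => [-> [-> ->]].
  + case: (R_counts B) => [e1 [e2 [e3 [e4 [e5 [e6 [e7 [e8 e9]]]]]]]].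
    rewrite /board_partition e1 e2 e3 e4 e5 e6 e7 e8 e9 => h'.
    by case: (arith_R h h') => [-> [-> [-> ->]]].
Qed.
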